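(* Let $X$ be a scattered topological space such that $\mathrm{Homeo}(X)$ is fully transitive, and assume each similarity class of $X$ is infinite. Then every closed normal subgroup of $\mathrm{Homeo}(X)$ is of the form $\mathrm{Fix}(A)$, where $A$ is a union of similarity classes (possibly empty).
   Context: A topological space (not assumed Hausdorff) is scattered if every nonempty subset has a point isolated in that subset. For scattered $X$, $\mathrm{Homeo}(X)$ carries the topology of pointwise convergence on $X$. Two points $x,y\in X$ are similar if there are neighbourhoods $U_x\ni x$, $U_y\ni y$ and a homeomorphism $h\colon U_x\to U_y$ with $h(x)=y$; the equivalence classes are similarity classes. $\mathrm{Homeo}(X)$ is fully transitive if for every $k$ and all $k$-tuples of pairwise distinct points $(x_1,\dots,x_k)$, $(y_1,\dots,y_k)$ with $x_i$ similar to $y_i$, some homeomorphism $g$ satisfies $g(x_i)=y_i$ for all $i$. For $A\subseteq X$, $\mathrm{Fix}(A)$ is the subgroup of homeomorphisms fixing every point of $A$ ($\mathrm{Fix}(\emptyset)=\mathrm{Homeo}(X)$). *)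

(* Defs.v *)
From HB Require Import structures.
From mathcomp Require Import all_boot all_order.
From mathcomp Require Import all_classical all_reals topology.
Set Implicit Arguments. Unset Strict Implicit. Unset Printing Implicit Defensive.
Local Open Scope classical_set_scope.

Section Defs.
Context {T : topologicalType}.

Definition scattered : Prop :=
  forall A : set T, A !=set0 ->
    exists2 x, A x & exists2 U : set T, open U & U `&` A = [set x].

Definition homeo (f : T -> T) : Prop :=
  exists g : T -> T, [/\ cancel f g, cancel g f, continuous f & continuous g].

Definition homeo_between (Ux Uy : set T) (h : T -> T) : Prop :=
  exists g : T -> T,
    [/\ h @` Ux `<=` Uy, g @` Uy `<=` Ux,
        {in Ux, cancel h g}, {in Uy, cancel g h} &
        {within Ux, continuous h} /\ {within Uy, continuous g}].

Definition similar (x y : T) : Prop :=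
  exists (Ux Uy : set T) (h : T -> T),
    [/\ nbhs x Ux, nbhs y Uy, homeo_between Ux Uy h & h x = y].

Definition fully_transitive : Prop :=
  forall (k : nat) (x y : 'I_k -> T), injective x -> injective y ->
    (forall i, similar (x i) (y i)) ->
    exists2 g, homeo g & forall i, g (x i) = y i.

Definition union_of_similarity_classes (A : set T) : Prop :=
  forall x y, A x -> similar x y -> A y.

Definition Fix (A : set T) : set (T -> T) :=
  [set g | homeo g /\ forall a, A a -> g a = a].

Definition subgroup_Homeo (N : set (T -> T)) : Prop :=
  [/\ N `<=` homeo, N id,
      (forall f g, N f -> N g -> N (f \o g)) &
      (forall f g, N f -> cancel f g -> cancel g f -> N g)].

Definition normal_Homeo (N : set (T -> T)) : Prop :=
  forall f g g', N f -> homeo g -> cancel g g' -> cancel g' g ->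
    N (g \o f \o g').

(* f lies in the closure of N for the topology of pointwise convergence on X:
   every basic neighbourhood {h | h (x_i) \in U_i, i < n} of f meets N *)
Definition pointwise_closure (N : set (T -> T)) (f : T -> T) : Prop :=
  forall (n : nat) (x : 'I_n -> T) (U : 'I_n -> set T),
    (forall i, open (U i) /\ U i (f (x i))) ->
    exists2 h, N h & forall i, U i (h (x i)).

Definition closed_in_Homeo (N : set (T -> T)) : Prop :=
  forall f, homeo f -> pointwise_closure N f -> N f.

End Defs.

(* Main.v *)
Require Import Defs.
From mathcomp Require Import all_boot all_order.
From mathcomp Require Import all_classical all_reals topology.
Local Open Scope classical_set_scope.
Set Implicit Arguments. Unset Strict Implicit.

Lemma homeo_id (T : topologicalType) : homeo (@id T).
Proof. by exists id; split => // x. Qed.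

Lemma homeo_inv (T : topologicalType) (f g : T -> T) :
  cancel f g -> cancel g f -> continuous f -> continuous g -> homeo g.
Proof. by move=> fg gf cf cg; exists f; split. Qed.

Lemma homeo_comp (T : topologicalType) (f1 f2 : T -> T) :
  homeo f1 -> homeo f2 -> homeo (f1 \o f2).
Proof.
move=> [g1 [c1 c1' k1 k1']] [g2 [c2 c2' k2 k2']].
exists (g2 \o g1); split; first exact: can_comp.
- exact: can_comp.
- by move=> x; apply: continuous_comp; [exact: k2|exact: k1].
- by move=> x; apply: continuous_comp; [exact: k1'|exact: k2'].
Qed.

Lemma homeo_similar (T : topologicalType) (f : T -> T) a :
  homeo f -> similar a (f a).
Proof.
move=> [g [fg gf cf cg]]; exists setT, setT, f; split => //; try exact: filterT.
exists g; split => //; try by move=> x _.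
by split; apply: continuous_subspaceT.
Qed.

Lemma FT_fix (T : topologicalType) : fully_transitive (T := T) ->
  forall (S : seq T) a b, uniq S -> a \notin S -> b \notin S -> similar a b ->
  exists2 g, homeo g & (forall z, z \in S -> g z = z) /\ g a = b.
Proof.
move=> hFT S a b uS aS bS sab.
pose x := fun i : 'I_(size S).+1 => nth a (rcons S a) i.
pose y := fun i : 'I_(size S).+1 => nth b (rcons S b) i.
have injx : injective x.
  move=> i j /eqP; rewrite /x nth_uniq ?size_rcons ?ltn_ord ?rcons_uniq ?aS //.
  by move/eqP/val_inj.
have injy : injective y.
  move=> i j /eqP; rewrite /y nth_uniq ?size_rcons ?ltn_ord ?rcons_uniq ?bS //.
  by move/eqP/val_inj.
have [|g hg gxy] := hFT _ x y injx injy.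
  move=> i; rewrite /x /y !nth_rcons; case: ifP => iS.
    rewrite (set_nth_default a b iS); exact: (homeo_similar _ (homeo_id T)).
  have -> : nat_of_ord i = size S by have := ltn_ord i; rewrite ltnS leq_eqVlt iS orbF => /eqP.
  by rewrite eqxx.
exists g => //; split.
  move=> z zS; have iz : index z S < (size S).+1 by rewrite ltnS ltnW // index_mem.
  have := gxy (Ordinal iz); rewrite /x /y /= !nth_rcons index_mem zS.
  by rewrite (set_nth_default b a) ?index_mem // nth_index.
have := gxy (Ordinal (ltnSn (size S))); rewrite /x /y /= !nth_rcons ltnn eqxx //.
Qed.

Lemma similar_hom (T : topologicalType) : fully_transitive (T := T) ->
  forall a b : T, similar a b -> exists2 g, homeo g & g a = b.
Proof.
move=> hFT a b sab; have [g hg [_ gab]] := FT_fix hFT (S := [::]) (a := a) (b := b) erefl erefl erefl sab.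
by exists g.
Qed.

Lemma similar_sym (T : topologicalType) : fully_transitive (T := T) ->
  forall a b : T, similar a b -> similar b a.
Proof.
move=> hFT a b /(similar_hom hFT) [g [g' [gg' g'g cg cg']] <-].
by rewrite -{2}(gg' a); apply: homeo_similar; apply: (homeo_inv gg').
Qed.

Lemma similar_trans (T : topologicalType) : fully_transitive (T := T) ->
  forall a b c : T, similar a b -> similar b c -> similar a c.
Proof.
move=> hFT a b c /(similar_hom hFT) [g hg <-] /(similar_hom hFT) [g2 hg2 <-].
exact: (homeo_similar a (homeo_comp hg2 hg)).
Qed.

Lemma fresh (T : topologicalType) (x : T) :
  infinite_set [set y | similar x y] -> forall S : seq T,
  exists y, similar x y /\ y \notin S.
Proof.
move=> hinf S; apply: contrapT => hno; apply: hinf.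
apply: (sub_finite_set _ (finite_seq S)) => y sxy /=.
apply: contrapT => yS; apply: hno; exists y; split => //; exact/negP.
Qed.

Theorem proposition18 (T : topologicalType) :
  scattered (T := T) -> fully_transitive (T := T) ->
  (forall x : T, infinite_set [set y | similar x y]) ->
  forall N : set (T -> T),
    subgroup_Homeo N -> normal_Homeo N -> closed_in_Homeo N ->
    exists A : set T, union_of_similarity_classes A /\ N = Fix A.
Proof.
move=> _ hFT hinf N [NH Nid Ncomp Ninv] Nnorm Ncl.
pose A := [set x : T | forall f, N f -> f x = x].
have hA : union_of_similarity_classes A.
  move=> x y Ax sxy f Nf.
  have [g [g' [gg' g'g cg cg']] gxy] := similar_hom hFT sxy.
  have hg' : homeo g' by apply: (homeo_inv gg').
  have := Ax _ (Nnorm f g' g Nf hg' g'g gg').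
  rewrite /= -gxy => e; apply: (can_inj g'g); by rewrite gg'.
have notA_hom : forall f p, ~ A p -> homeo f -> ~ A (f p).
  move=> f p Ap hf Afp; apply: Ap; apply: (hA _ _ Afp).
  exact: (similar_sym hFT (homeo_similar p hf)).
have EL : forall p (F : seq T), ~ A p -> p \notin F ->
    exists e, [/\ N e, (forall z, z \in F -> e z = z) & e p != p].
  move=> p F Ap pF.
  have : ~ (forall f, N f -> f p = p) := Ap.
  move=> /existsNP [e0 /not_implyP [Ne0 e0p]].
  have [e0' [c1 c2 k1 k2]] := NH _ Ne0.
  pose v := e0' p.
  have vp : v != p by apply/eqP => vp; apply: e0p; rewrite -vp /v c2.
  have [v2 [svv2 v2S]] := fresh (hinf v) (p :: F).
  have vp1 : v \notin [:: p] by rewrite inE.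
  have v2p1 : v2 \notin [:: p] by move: v2S; rewrite !inE negb_or => /andP[].
  have [k hk [kp kv]] := FT_fix hFT (S := [:: p]) (a := v) (b := v2) erefl
    vp1 v2p1 svv2.
  have kp' := kp p (mem_head _ _).
  have [k' [kk' k'k ck ck']] := hk.
  have hk' : homeo k' by apply: (homeo_inv kk').
  pose e1 := k \o e0 \o k'; pose e1' := k \o e0' \o k'.
  have Ne1 : N e1 by apply: Nnorm.
  have c11 : cancel e1 e1' by move=> x; rewrite /e1 /e1' /= kk' c1 k'k.
  have c12 : cancel e1' e1 by move=> x; rewrite /e1 /e1' /= kk' c2 k'k.
  have Ne1' : N e1' by apply: (Ninv _ _ Ne1).
  have k'p : k' p = p by rewrite -{1}kp' kk'.
  have e1'p : e1' p = v2 by rewrite /e1' /= k'p.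
  have v2p : v2 != p by move: v2S; rewrite inE negb_or => /andP[].
  have v2F : v2 \notin F by move: v2S; rewrite inE negb_or => /andP[].
  pose S := undup (p :: F ++ map e1' F).
  have v2S' : v2 \notin S.
    rewrite mem_undup inE negb_or v2p mem_cat negb_or v2F /=.
    apply/mapP => -[x xF ex].
    have : e1 v2 = p by rewrite -e1'p c12.
    by rewrite ex c12 => xp; rewrite -xp xF in pF.
  have [w [sw wS]] := fresh (hinf v2) (v2 :: S).
  have wS' : w \notin S by move: wS; rewrite inE negb_or => /andP[].
  have wv2 : w != v2 by move: wS; rewrite inE negb_or eq_sym => /andP[].
  have [g hg [gS gv2]] := FT_fix hFT (undup_uniq _) v2S' wS' sw.
  have [g' [gg' g'g cg cg']] := hg.
  have hg' : homeo g' by apply: (homeo_inv gg').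
  have g'S : forall z, z \in S -> g' z = z by move=> z /gS {1}<-; rewrite gg'.
  exists ((g' \o e1 \o g) \o e1'); split.
  - by apply: Ncomp => //; apply: Nnorm.
  - move=> z zF /=.
    rewrite gS; last by rewrite mem_undup inE mem_cat map_f ?orbT.
    by rewrite c12 g'S // mem_undup inE mem_cat zF orbT.
  - rewrite /= e1'p gv2; apply/eqP => eq.
    have : e1 w = p by rewrite -(g'g (e1 w)) eq gS // mem_undup mem_head.
    move=> /(congr1 e1'); rewrite c11 e1'p => /eqP; by rewrite (negPf wv2).
have EL' : forall y q (G : seq T), ~ A y -> similar y q -> y != q ->
    y \notin G -> q \notin G ->
    exists e, [/\ N e, (forall z, z \in G -> e z = z) & e y = q].
  move=> y q G Ay syq yq yG qG.
  have [e [Ne eG ey]] := EL y G Ay yG.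
  have [e' [ce ce' _ _]] := NH _ Ne.
  pose S := undup (y :: G).
  have rS : e y \notin S.
    rewrite mem_undup inE negb_or ey /=; apply/negP => eyG.
    move: (eG _ eyG) => /(can_inj ce) eyy; by rewrite eyy eqxx in ey.
  have qS : q \notin S by rewrite mem_undup inE negb_or qG eq_sym yq.
  have sr : similar (e y) q.
    apply: (similar_trans hFT _ syq); apply: (similar_sym hFT).
    exact: homeo_similar (NH _ Ne).
  have [g hg [gS gr]] := FT_fix hFT (undup_uniq _) rS qS sr.
  have [g' [gg' g'g cg cg']] := hg.
  have g'S : forall z, z \in S -> g' z = z by move=> z /gS {1}<-; rewrite gg'.
  exists (g \o e \o g'); split.
  - by apply: Nnorm.
  - move=> z zG /=; rewrite g'S ?eG ?gS // mem_undup inE zG orbT //.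
  - by rewrite /= g'S ?mem_undup ?mem_head.
exists A; split => //.
apply/seteqP; split.
  by move=> f Nf; split; [exact: NH | move=> a Aa; exact: Aa].
move=> h [hh hA'].
have L2 : forall s : seq T, uniq s -> (forall z, z \in s -> ~ A z) ->
    exists f, N f /\ forall z, z \in s -> f z = h z.
  elim=> [|p s IH]; first by move=> _ _; exists id.
  rewrite cons_uniq => /andP[ps us] As.
  have [f' [Nf' f'h]] := IH us (fun z zs => As z (mem_behead (s := p :: s) zs)).
  have hf' := NH _ Nf'.
  have [f'i [cf' _ _ _]] := hf'.
  have [hi [ch _ _ _]] := hh.
  case: (eqVneq (f' p) (h p)) => [yh|yh].
    exists f'; split => // z; rewrite inE => /orP[/eqP->//|]; exact: f'h.
  have Ay : ~ A (f' p) by apply: notA_hom => //; apply: As; exact: mem_head.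
  have syq : similar (f' p) (h p).
    apply: (similar_trans hFT (similar_sym hFT (homeo_similar p hf'))).
    exact: homeo_similar.
  have yG : f' p \notin map h s.
    apply/mapP => -[z zs]; rewrite -f'h // => /(can_inj cf') pz.
    by rewrite pz zs in ps.
  have qG : h p \notin map h s by rewrite (mem_map (can_inj ch)).
  have [f0 [Nf0 f0G f0y]] := EL' _ _ _ Ay syq yh yG qG.
  exists (f0 \o f'); split; first exact: Ncomp.
  move=> z; rewrite inE => /orP[/eqP->//|zs] /=.
  by rewrite f'h // f0G // map_f.
apply: Ncl => // n x U hU.
pose s := undup [seq z <- map x (enum 'I_n) | `[< ~ A z >]].
have [|f [Nf fh]] := L2 s (undup_uniq _).
  by move=> z; rewrite mem_undup mem_filter => /andP[/asboolP].
exists f => // i.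
have -> : f (x i) = h (x i).
  have [Axi|Axi] := pselect (A (x i)); first by rewrite Axi // hA'.
  apply: fh; rewrite mem_undup mem_filter map_f ?mem_enum // andbT.
  exact/asboolP.
exact: (hU i).2.
Qed.
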